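(* Let $\mathbb{0}=\{x\in\omega^\omega : x(n)=0 \text{ for all but finitely many } n\}$. Then every maximal antichain of $(\omega^\omega\setminus\mathbb{0},\le^* )$ has size $\mathfrak{c}$; i.e. $\mathfrak{mac}(\omega^\omega\setminus\mathbb{0},\le^* )=\mathfrak{c}$.
   Context: For $x,y\in\omega^\omega$, $x\le^* y$ means $x(n)\le y(n)$ for all but finitely many $n$. For a poset (or preorder) $(P,\le)$, an antichain is a subset whose elements are pairwise incomparable (neither $p\le q$ nor $q\le p$ for distinct members), and $\mathfrak{mac}(P)$ is the minimal cardinality of a maximal (with respect to inclusion) antichain of $P$. $\mathfrak{c}=2^{\aleph_0}$. *)

(* Defs.v *)
From mathcomp Require Import all_boot all_order.
From mathcomp Require Import boolp classical_sets cardinality.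
Set Implicit Arguments. Unset Strict Implicit. Unset Printing Implicit Defensive.
Local Open Scope classical_set_scope.

Definition le_star (x y : nat -> nat) : Prop :=
  exists N : nat, forall n, (N <= n)%N -> (x n <= y n)%N.

Definition eventually_zero (x : nat -> nat) : Prop :=
  exists N : nat, forall n, (N <= n)%N -> x n = 0%N.

Definition Pset : set (nat -> nat) := [set x | ~ eventually_zero x].

Definition antichain {T} (le : T -> T -> Prop) (P A : set T) : Prop :=
  A `<=` P /\
  forall x y, A x -> A y -> x <> y -> ~ le x y /\ ~ le y x.

Definition maximal_antichain {T} (le : T -> T -> Prop) (P A : set T) : Prop :=
  antichain le P A /\
  forall B, antichain le P B -> A `<=` B -> B = A.

(* Main.v *)
Require Import Defs.
From mathcomp Require Import all_boot all_order.
From mathcomp Require Import boolp classical_sets cardinality.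
From mathcomp Require Import zify.
Local Open Scope classical_set_scope.
Local Open Scope card_scope.

Fixpoint pc (f : nat -> bool) (k : nat) : nat :=
  match k with 0 => 1 | k.+1 => 2 * pc f k + f k end.

Lemma pc_bounds f k : 2 ^ k <= pc f k < 2 ^ k.+1.
Proof.
elim: k => [|k /andP[IH1 IH2]] //=. rewrite !expnS in IH2 *. apply/andP; case: (f k) => /=; split; lia.
Qed.

Lemma pc_len f g k j : pc f k = pc g j -> k = j.
Proof.
move=> E.
have [lt|ge] := ltnP k j.
  have h1 := pc_bounds f k; have h2 := pc_bounds g j.
  have : 2 ^ k.+1 <= 2 ^ j by rewrite leq_pexp2l.
  lia.
have [lt'|ge'] := ltnP j k; last by lia.
have h1 := pc_bounds f k; have h2 := pc_bounds g j.
have : 2 ^ j.+1 <= 2 ^ k by rewrite leq_pexp2l.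
lia.
Qed.

Lemma pc_agree f g k : pc f k = pc g k -> forall i, i < k -> f i = g i.
Proof.
elim: k => [|k IH] //= E i ik.
have [E1 E2] : pc f k = pc g k /\ f k = g k.
  by move: E; case: (f k); case: (g k) => /=; lia.
rewrite ltnS leq_eqVlt in ik; case/orP: ik => [/eqP->//|]; exact: IH.
Qed.

Lemma pc_sep f g i j j' : f i <> g i -> pc f j = pc g j' -> pc f j < 2 ^ i.+1.
Proof.
move=> ne E; have jj := pc_len _ _ _ _ E; subst j'.
have [ij|ji] := ltnP i j; first by case: ne; exact: pc_agree _ _ _ E _ ij.
have h := pc_bounds f j.
have : 2 ^ j.+1 <= 2 ^ i.+1 by rewrite leq_pexp2l.
lia.
Qed.

Lemma pc_gt f j : j < pc f j.
Proof. have h := pc_bounds f j; have := ltn_expl j (isT : 1 < 2). lia. Qed.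

Fixpoint cnt (a : nat -> nat) n := match n with 0 => 0 | n.+1 => cnt a n + (0 < a n) end.

Lemma cnt_mono a m n : m <= n -> cnt a m <= cnt a n.
Proof.
elim: n => [|n IH]; first by rewrite leqn0 => /eqP->.
rewrite leq_eqVlt => /orP[/eqP->//|]; rewrite ltnS => /IH /=; lia.
Qed.

Lemma cnt_unb a : ~ eventually_zero a -> forall B, exists n, B <= cnt a n.
Proof.
move=> nz; elim=> [|B [n Hn]]; first by exists 0.
have [m [mn am]] : exists m, n <= m /\ a m <> 0.
  apply: contra_notP nz => H; exists n => k kn.
  by apply: contra_notP H => ak; exists k.
exists m.+1 => /=; have := cnt_mono a _ _ mn; move: am; case: (a m) => //= *; lia.
Qed.

Lemma cnt_large a : ~ eventually_zero a -> forall B, exists M, forall n, M <= n -> B <= cnt a n.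
Proof.
move=> nz B; have [M HM] := cnt_unb _ nz B; exists M => n Mn.
exact: leq_trans HM (cnt_mono a _ _ Mn).
Qed.

Lemma cnt_hit a n k : k < cnt a n -> exists m, m < n /\ 0 < a m /\ cnt a m = k.
Proof.
elim: n => [|n IH] //= H.
have [lt|ge] := ltnP k (cnt a n).
  by have [m [? ?]] := IH lt; exists m; split => //; lia.
exists n; move: H; case: (ltnP 0 (a n)) => /= an H; first by split => //; split => //; lia.
lia.
Qed.

Lemma cnt_find a : ~ eventually_zero a -> forall k M, cnt a M < k ->
  exists m, M <= m /\ 0 < a m /\ cnt a m = k.
Proof.
move=> nz k M H; have [n Hn] := cnt_unb _ nz k.+1.
have [m [_ [am cm]]] := cnt_hit _ _ _ Hn; exists m; split => //.
have [//|mM] := leqP M m.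
have := cnt_mono a _ _ (ltnW mM); lia.
Qed.
Definition Nf a (f : nat -> bool) n := exists j, cnt a n = 2 * pc f j.
Definition Pf a (f : nat -> bool) n := exists j, cnt a n = (2 * pc f j).+1.
Definition yf a f n := if `[< Nf a f n >] then 0 else if `[< Pf a f n >] then (a n).+1 else a n.

Lemma NP_disj a f n : Nf a f n -> Pf a f n -> False.
Proof. move=> [j Hj] [k Hk]; lia. Qed.

Lemma y_le a f n : ~ Pf a f n -> yf a f n <= a n.
Proof. by move=> nP; rewrite /yf; case: asboolP => // _; case: asboolP. Qed.

Lemma y_ge a f n : ~ Nf a f n -> a n <= yf a f n.
Proof. by move=> nN; rewrite /yf; case: asboolP => // _; case: asboolP. Qed.

Lemma y_P a f n : Pf a f n -> yf a f n = (a n).+1.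
Proof.
move=> hP; rewrite /yf; case: asboolP => [hN|_]; first by case: (NP_disj _ _ _ hN hP).
by case: asboolP.
Qed.

Lemma y_N a f n : Nf a f n -> yf a f n = 0.
Proof. by move=> hN; rewrite /yf; case: asboolP. Qed.

Lemma sep a f g : ~ eventually_zero a -> f <> g ->
  exists M, forall n, M <= n -> ~ (Pf a f n /\ Pf a g n) /\ ~ (Nf a f n /\ Nf a g n).
Proof.
move=> nz fg.
have [i fi] : exists i, f i <> g i.
  apply: contra_notP fg => H; apply: funext => i; apply: contra_notP H => ne; by exists i.
have [M HM] := cnt_large _ nz (2 * 2 ^ i.+1).+2.
exists M => n /HM Hn; split.
  move=> [[j Hj] [k Hk]]; have E : pc f j = pc g k by lia.
  have := pc_sep _ _ _ _ _ fi E; lia.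
move=> [[j Hj] [k Hk]]; have E : pc f j = pc g k by lia.
have := pc_sep _ _ _ _ _ fi E; lia.
Qed.

Lemma P_inf a f : ~ eventually_zero a -> forall M, exists n, M <= n /\ Pf a f n.
Proof.
move=> nz M; have h := pc_gt f (cnt a M).
have [m [Mm [_ cm]]] := cnt_find _ nz (2 * pc f (cnt a M)).+1 M ltac:(lia).
by exists m; split => //; exists (cnt a M).
Qed.

Lemma N_inf a f : ~ eventually_zero a -> forall M, exists n, M <= n /\ 0 < a n /\ Nf a f n.
Proof.
move=> nz M; have h := pc_gt f (cnt a M).
have [m [Mm [am cm]]] := cnt_find _ nz (2 * pc f (cnt a M)) M ltac:(lia).
by exists m; split => //; split => //; exists (cnt a M).
Qed.

Lemma comparable_ex A x : maximal_antichain le_star Pset A -> Pset x ->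
  exists b, A b /\ (le_star b x \/ le_star x b).
Proof.
move=> [[AP Aanti] Amax] Px; apply: contrapT => H.
have refl : le_star x x by exists 0.
have Hanti : antichain le_star Pset (A `|` [set x]).
  split; first by move=> z [/AP|->].
  move=> u v [Au|->] [Av|->] uv.
  - exact: Aanti.
  - split => h; apply: H; exists u; (split; first done); by [left|right].
  - split => h; apply: H; exists v; (split; first done); by [left|right].
  - by case: uv.
have E := Amax _ Hanti (@subsetUl _ A [set x]).
have Ax : A x by rewrite -E; right.
by apply: H; exists x; split => //; left.
Qed.

Lemma no_le a f g : ~ eventually_zero a -> f <> g -> ~ le_star (yf a g) (yf a f).
Proof.
move=> nz fg [N HN]; have [M HM] := sep _ _ _ nz fg.
have [n [Hn hP]] := P_inf a g nz (maxn M N).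
have nP : ~ Pf a f n by move=> h; apply: (HM n ltac:(lia)).1.
have := HN n ltac:(lia); rewrite (y_P _ _ _ hP); have := y_le _ _ _ nP; lia.
Qed.

Lemma le_star_trans x y z : le_star x y -> le_star y z -> le_star x z.
Proof.
move=> [N1 H1] [N2 H2]; exists (maxn N1 N2) => n Hn.
exact: leq_trans (H1 n ltac:(lia)) (H2 n ltac:(lia)).
Qed.

Theorem mainTheorem3 (A : set (nat -> nat)) :
  maximal_antichain le_star Pset A -> A #= [set: nat -> bool].
Proof.
move=> HA; have [[AP Aanti] _] := HA.
have P1 : Pset (fun _ => 1) by move=> [N H]; have := H N (leqnn N).
have [a [Aa _]] := comparable_ex _ _ HA P1.
have nz : ~ eventually_zero a := AP a Aa.
have Py f : Pset (yf a f).
  move=> [N H]; have [n [Nn hP]] := P_inf a f nz N.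
  by have := H n Nn; rewrite (y_P _ _ _ hP).
have [F HF] : exists F : (nat -> bool) -> (nat -> nat), forall f,
    A (F f) /\ (le_star (F f) (yf a f) \/ le_star (yf a f) (F f)).
  have [F HF] := choice (fun f => comparable_ex _ _ HA (Py f)).
  by exists F.
have Finj : forall f g, F f = F g -> f = g.
  move=> f g E; apply: contrapT => fg.
  have [M HM] := sep _ _ _ nz fg.
  have [Ab [Hf|Hf]] := HF f; have [_ [Hg|Hg]] := HF g; rewrite -E in Hg.
  -
    have ba : le_star (F f) a.
      case: Hf => [N1 H1]; case: Hg => [N2 H2]; exists (maxn M (maxn N1 N2)) => n Hn.
      have := H1 n ltac:(lia); have := H2 n ltac:(lia).
      case: (pselect (Pf a f n)) => hf.
        have hg : ~ Pf a g n by move=> hg; apply: (HM n ltac:(lia)).1.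
        have := y_le _ _ _ hg; lia.
      have := y_le _ _ _ hf; lia.
    case: (pselect (F f = a)) => Fa.
      case: Hf => [N1 H1]; rewrite Fa in H1.
      have [n [Hn [an hN]]] := N_inf a f nz N1.
      by have := H1 n Hn; rewrite (y_N _ _ _ hN); lia.
    by case: (Aanti _ _ Ab Aa Fa) => + _; apply.
  - exact: (no_le _ _ _ nz fg (le_star_trans _ _ _ Hg Hf)).
  - have fg' : g <> f by move=> h; apply: fg.
    exact: (no_le _ _ _ nz fg' (le_star_trans _ _ _ Hf Hg)).
  -
    have ab : le_star a (F f).
      case: Hf => [N1 H1]; case: Hg => [N2 H2]; exists (maxn M (maxn N1 N2)) => n Hn.
      have := H1 n ltac:(lia); have := H2 n ltac:(lia).
      case: (pselect (Nf a f n)) => hf.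
        have hg : ~ Nf a g n by move=> hg; apply: (HM n ltac:(lia)).2.
        have := y_ge _ _ _ hg; lia.
      have := y_ge _ _ _ hf; lia.
    case: (pselect (F f = a)) => Fa.
      case: Hf => [N1 H1]; rewrite Fa in H1.
      have [n [Hn hP]] := P_inf a f nz N1.
      by have := H1 n Hn; rewrite (y_P _ _ _ hP); lia.
    by case: (Aanti _ _ Ab Aa Fa) => _; apply.
apply: Cantor_Bernstein.
  apply/pcard_injP.
  exists (fun x m => if (unpickle m : option (nat * nat)) is Some (i, j) then x i == j else false).
  move=> x y _ _ E; apply: funext => i.
  have := congr1 (fun h => h (pickle (i, x i))) E; rewrite /= pickleK eqxx.
  by move/esym/eqP.
apply/pcard_leP; apply/injfunPex; exists F.
  by move=> f _; exact: (HF f).1.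
by move=> f g _ _; apply: Finj.
Qed.
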